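(* Let $|\Psi\rangle$ be any pure single-qubit non-stabilizer state whose density matrix lies in the set $P_Y$. Then any $\omega$-witness $|\omega\rangle$ achieving $|\langle\Psi|\omega\rangle|^2=\xi(\Psi)$ satisfies $$|\omega\rangle\langle\omega|=\frac{I+qH+\sqrt{1-q^2}\,Y}{1+q/\sqrt2},\qquad H=(X+Z)/\sqrt2,$$ for some $q$ with $\sqrt{2/3}\le q\le1$. Furthermore, if $|\Psi\rangle\langle\Psi|$ is in $P_Y\cap P_X$ or in $P_Y\cap P_Z$, then $q=\sqrt{2/3}$, i.e. $$|\omega\rangle\langle\omega|=\frac{I+(X+Y+Z)/\sqrt3}{1+1/\sqrt3}.$$
   Context: $X,Y,Z$ are the Pauli matrices; the single-qubit pure stabilizer states are $|0\rangle,|1\rangle,|\pm\rangle,|\pm_i\rangle$. An $\omega$-witness is a vector $|\omega\rangle\in\mathbb C^2$ with $|\langle\omega|\phi\rangle|\le1$ for all pure single-qubit stabilizer states $|\phi\rangle$; $\xi(\Psi)=\min\{\|c\|_1^2:|\Psi\rangle=\sum_jc_j|\phi_j\rangle,\ |\phi_j\rangle\text{ stabilizer}\}$. Writing $\langle M\rangle=\mathrm{Tr}[\rho M]$: the positive octant is $P=\{\rho:\langle X\rangle,\langle Y\rangle,\langle Z\rangle\ge0\}$, and $P_X=\{\rho\in P:\langle X\rangle\le\langle Y\rangle,\ \langle X\rangle\le\langle Z\rangle\}$, $P_Y=\{\rho\in P:\langle Y\rangle\le\langle X\rangle,\ \langle Y\rangle\le\langle Z\rangle\}$, $P_Z=\{\rho\in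 P:\langle Z\rangle\le\langle X\rangle,\ \langle Z\rangle\le\langle Y\rangle\}$. *)

(* Defs.v *)
From HB Require Import structures.
From mathcomp Require Import all_boot all_order all_algebra.
From mathcomp Require Import complex.
Set Implicit Arguments. Unset Strict Implicit. Unset Printing Implicit Defensive.
Import Order.TTheory GRing.Theory Num.Theory.
Import ComplexField Normc.
Local Open Scope ring_scope.
Local Open Scope complex_scope.

Section Qubit.
Variable R : rcfType.
Local Notation C := R[i].

Definition cabs (z : C) : R := normc z.

Definition vec2 (a b : C) : 'cV[C]_2 :=
  \col_(i < 2) (if val i == 0%N then a else b).

Definition mat2 (a b c d : C) : 'M[C]_2 :=
  \matrix_(i < 2, j < 2)
    (if val i == 0%N then (if val j == 0%N then a else b)
     else (if val j == 0%N then c else d)).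

Definition PX : 'M[C]_2 := mat2 0 1 1 0.
Definition PY : 'M[C]_2 := mat2 0 (- 'i) 'i 0.
Definition PZ : 'M[C]_2 := mat2 1 0 0 (-1).

Definition adj (v : 'cV[C]_2) : 'rV[C]_2 := (map_mx (@conjc R) v)^T.
Definition braket (u v : 'cV[C]_2) : C := (adj u *m v) 0 0.
Definition proj (v : 'cV[C]_2) : 'M[C]_2 := v *m adj v.

Definition isr2 : C := (Num.sqrt (2 : R))^-1%:C.
Definition stab (k : 'I_6) : 'cV[C]_2 :=
  match val k with
  | 0 => vec2 1 0
  | 1 => vec2 0 1
  | 2 => isr2 *: vec2 1 1
  | 3 => isr2 *: vec2 1 (-1)
  | 4 => isr2 *: vec2 1 'i
  | _ => isr2 *: vec2 1 (- 'i)
  end.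

Definition is_stab (v : 'cV[C]_2) : Prop :=
  exists (k : 'I_6) (u : C), cabs u = 1 /\ v = u *: stab k.

Definition is_witness (w : 'cV[C]_2) : Prop :=
  forall phi, is_stab phi -> cabs (braket w phi) <= 1.

Definition is_decomp (psi : 'cV[C]_2) (s : seq (C * 'cV[C]_2)) : Prop :=
  (forall p, p \in s -> is_stab p.2) /\ psi = \sum_(p <- s) p.1 *: p.2.

Definition cost (s : seq (C * 'cV[C]_2)) : R := (\sum_(p <- s) cabs p.1) ^+ 2.

Definition xi_is (psi : 'cV[C]_2) (r : R) : Prop :=
  (exists s, is_decomp psi s /\ cost s = r) /\
  (forall s, is_decomp psi s -> r <= cost s).

(* <M> = Tr[rho M] (real for Hermitian rho, M) *)
Definition ev (rho M : 'M[C]_2) : R := complex.Re (\tr (rho *m M)).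

Definition inP (rho : 'M[C]_2) : Prop :=
  0 <= ev rho PX /\ 0 <= ev rho PY /\ 0 <= ev rho PZ.
Definition inPX (rho : 'M[C]_2) : Prop :=
  inP rho /\ ev rho PX <= ev rho PY /\ ev rho PX <= ev rho PZ.
Definition inPY (rho : 'M[C]_2) : Prop :=
  inP rho /\ ev rho PY <= ev rho PX /\ ev rho PY <= ev rho PZ.
Definition inPZ (rho : 'M[C]_2) : Prop :=
  inP rho /\ ev rho PZ <= ev rho PX /\ ev rho PZ <= ev rho PY.

Definition PH : 'M[C]_2 := isr2 *: (PX + PZ).

Definition omega_q (q : R) : 'M[C]_2 :=
  ((1 + q / Num.sqrt 2)^-1)%:C *:
    (1%:M + q%:C *: PH + (Num.sqrt (1 - q ^+ 2))%:C *: PY).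

Definition omega_sym : 'M[C]_2 :=
  ((1 + (Num.sqrt 3)^-1)^-1)%:C *:
    (1%:M + ((Num.sqrt (3 : R))^-1)%:C *: (PX + PY + PZ)).

End Qubit.

(* Main.v *)
Require Import Defs.
From HB Require Import structures.
From mathcomp Require Import all_boot all_order all_algebra.
From mathcomp Require Import complex.
From mathcomp Require Import ring lra.
Import Order.TTheory GRing.Theory Num.Theory.
Import ComplexField Normc.
Local Open Scope ring_scope.
Local Open Scope complex_scope.

Section S.
Variable R : rcfType.
Local Notation C := R[i].

Lemma i2_0 : (ord0 : 'I_2) = 0. Proof. by apply/val_inj. Qed.
Lemma i2_1 : (lift ord0 ord0 : 'I_2) = 1. Proof. by apply/val_inj. Qed.

Lemma braketE (u v : 'cV[C]_2) : braket u v = (u 0 0)^* * v 0 0 + (u 1 0)^* * v 1 0.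
Proof. by rewrite /braket mxE !big_ord_recl big_ord0 !mxE addr0 i2_0 i2_1. Qed.

Definition bn (v : 'cV[C]_2) : R :=
  complex.Re (v 0 0) ^+ 2 + complex.Im (v 0 0) ^+ 2 + complex.Re (v 1 0) ^+ 2 + complex.Im (v 1 0) ^+ 2.
Definition bx (v : 'cV[C]_2) : R :=
  2 * (complex.Re (v 0 0) * complex.Re (v 1 0) + complex.Im (v 0 0) * complex.Im (v 1 0)).
Definition by_ (v : 'cV[C]_2) : R :=
  2 * (complex.Re (v 0 0) * complex.Im (v 1 0) - complex.Im (v 0 0) * complex.Re (v 1 0)).
Definition bz (v : 'cV[C]_2) : R :=
  complex.Re (v 0 0) ^+ 2 + complex.Im (v 0 0) ^+ 2 - complex.Re (v 1 0) ^+ 2 - complex.Im (v 1 0) ^+ 2.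

Lemma cabs2 (z : C) : cabs z ^+ 2 = complex.Re z ^+ 2 + complex.Im z ^+ 2.
Proof. case: z => a b /=; rewrite /cabs /= sqr_sqrtr //; apply: addr_ge0; apply: sqr_ge0. Qed.

Lemma cabs_ge0 (z : C) : 0 <= cabs z.
Proof. case: z => a b; rewrite /cabs /=; exact: sqrtr_ge0. Qed.

Lemma overlap (u v : 'cV[C]_2) : cabs (braket u v) ^+ 2 =
  (bn u * bn v + bx u * bx v + by_ u * by_ v + bz u * bz v) / 2.
Proof.
rewrite cabs2 braketE /bn /bx /by_ /bz.
move: (u 0 0) (u 1 0) (v 0 0) (v 1 0) => [a1 a2][b1 b2][c1 c2][d1 d2].
simpc => /=. by field.
Qed.

Lemma pure (v : 'cV[C]_2) : bx v ^+ 2 + by_ v ^+ 2 + bz v ^+ 2 = bn v ^+ 2.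
Proof. rewrite /bn /bx /by_ /bz; ring. Qed.

Lemma braket_self (v : 'cV[C]_2) : braket v v = (bn v)%:C.
Proof.
rewrite braketE /bn; move: (v 0 0) (v 1 0) => [a1 a2][b1 b2].
simpc => /=. apply/eqP; rewrite eq_complex /=; apply/andP; split; apply/eqP; ring.
Qed.

Lemma projE (v : 'cV[C]_2) i j : proj v i j = v i 0 * (v j 0)^*.
Proof. by rewrite /proj mxE big_ord1 !mxE. Qed.

Lemma tr2 (A B : 'M[C]_2) : \tr (A *m B) = A 0 0 * B 0 0 + A 0 1 * B 1 0 + (A 1 0 * B 0 1 + A 1 1 * B 1 1).
Proof.
rewrite /mxtrace !big_ord_recl big_ord0 !mxE !big_ord_recl !big_ord0 i2_0 i2_1.
by rewrite !addr0 !addrA.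
Qed.

Ltac cplx := apply/eqP; rewrite eq_complex /=; apply/andP; split; apply/eqP.

Lemma evX (v : 'cV[C]_2) : ev (proj v) (PX R) = bx v.
Proof.
rewrite /ev tr2 !projE /PX !mxE /= /bx; move: (v 0 0) (v 1 0) => [a1 a2][b1 b2].
simpc => /=. ring.
Qed.
Lemma evY (v : 'cV[C]_2) : ev (proj v) (PY R) = by_ v.
Proof.
rewrite /ev tr2 !projE /PY !mxE /= /by_; move: (v 0 0) (v 1 0) => [a1 a2][b1 b2].
simpc => /=. ring.
Qed.
Lemma evZ (v : 'cV[C]_2) : ev (proj v) (PZ R) = bz v.
Proof.
rewrite /ev tr2 !projE /PZ !mxE /= /bz; move: (v 0 0) (v 1 0) => [a1 a2][b1 b2].
simpc => /=. ring.
Qed.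


Lemma ord2 (i : 'I_2) : i = 0 \/ i = 1.
Proof. case: i => [[|[|k]] hi]; [left|right|by []]; exact: val_inj. Qed.

Lemma cV2_eq (u v : 'cV[C]_2) : u 0 0 = v 0 0 -> u 1 0 = v 1 0 -> u = v.
Proof.
move=> h0 h1; apply/matrixP => i j; rewrite (ord1 j).
by case: (ord2 i) => ->.
Qed.

Lemma M2_eq (A B : 'M[C]_2) : A 0 0 = B 0 0 -> A 0 1 = B 0 1 -> A 1 0 = B 1 0 -> A 1 1 = B 1 1 -> A = B.
Proof.
move=> h00 h01 h10 h11; apply/matrixP => i j.
by case: (ord2 i) => ->; case: (ord2 j) => ->.
Qed.

Lemma braketZ (w v : 'cV[C]_2) (u : C) : braket w (u *: v) = u * braket w v.
Proof. rewrite !braketE !mxE; ring. Qed.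

Lemma braketD (w v v' : 'cV[C]_2) : braket w (v + v') = braket w v + braket w v'.
Proof. rewrite !braketE !mxE; ring. Qed.

Lemma braket0 (w : 'cV[C]_2) : braket w 0 = 0.
Proof. rewrite !braketE !mxE; ring. Qed.

Lemma cabsM (a b : C) : cabs (a * b) = cabs a * cabs b.
Proof. exact: normcM. Qed.

Lemma cabsD (a b : C) : cabs (a + b) <= cabs a + cabs b.
Proof. exact: le_normcD. Qed.

Definition s2 : R := Num.sqrt 2.
Lemma s2_sq : s2 ^+ 2 = 2. Proof. by rewrite /s2 sqr_sqrtr // ler0n. Qed.
Lemma s2_gt0 : 0 < s2. Proof. by rewrite /s2 sqrtr_gt0 ltr0n. Qed.
Lemma s2_neq0 : s2 != 0. Proof. by rewrite gt_eqF // s2_gt0. Qed.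
Lemma inv_s2_sq : s2^-1 ^+ 2 = 2^-1. Proof. by rewrite exprVn s2_sq. Qed.


Lemma vec2_0 (a b : C) : vec2 a b 0 0 = a. Proof. by rewrite mxE. Qed.
Lemma vec2_1 (a b : C) : vec2 a b 1 0 = b. Proof. by rewrite mxE. Qed.

Lemma bloch_vec2 (a1 a2 b1 b2 : R) :
  let v := vec2 (a1 +i* a2) (b1 +i* b2) in
  [/\ bn v = a1^+2 + a2^+2 + b1^+2 + b2^+2, bx v = 2 * (a1 * b1 + a2 * b2),
      by_ v = 2 * (a1 * b2 - a2 * b1) & bz v = a1^+2 + a2^+2 - b1^+2 - b2^+2].
Proof. by rewrite /bn /bx /by_ /bz !vec2_0 !vec2_1. Qed.

Lemma scale_vec2 (c a b : C) : c *: vec2 a b = vec2 (c * a) (c * b).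
Proof. by apply: cV2_eq; rewrite !mxE. Qed.

Definition stab_val (w : 'cV[C]_2) (k : nat) : R :=
  match k with
  | 0 => bz w | 1 => - bz w | 2 => bx w | 3 => - bx w | 4 => by_ w | _ => - by_ w end.

Lemma stab_vec (k : 'I_6) : exists a1 a2 b1 b2 : R,
  stab R k = vec2 (a1 +i* a2) (b1 +i* b2) /\
  (forall w, (bn w * (a1^+2 + a2^+2 + b1^+2 + b2^+2) + bx w * (2 * (a1 * b1 + a2 * b2))
      + by_ w * (2 * (a1 * b2 - a2 * b1)) + bz w * (a1^+2 + a2^+2 - b1^+2 - b2^+2)) / 2
    = (bn w + stab_val w k) / 2).
Proof.
have h2 := inv_s2_sq.
have hs := s2_neq0.
have h2p : s2^-1 * s2^-1 = 2^-1 by rewrite -expr2.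
case: k => [[|[|[|[|[|[|k]]]]]] hk].
- exists 1, 0, 0, 0; split; first by [].
  move=> w /=; apply: (congr1 (fun t => t / 2)); rewrite expr1n expr0n /=; ring.
- exists 0, 0, 1, 0; split; first by [].
  move=> w /=; apply: (congr1 (fun t => t / 2)); rewrite expr1n expr0n /=; ring.
- exists (s2^-1), 0, (s2^-1), 0; split.
    change (isr2 R *: vec2 1 1 = vec2 (s2^-1 +i* 0) (s2^-1 +i* 0)).
    by rewrite scale_vec2 /isr2 mulr1.
  move=> w /=; apply: (congr1 (fun t => t / 2)); rewrite expr0n /= -expr2 h2. by field.
- exists (s2^-1); exists 0; exists (- s2^-1); exists 0; split.
    change (isr2 R *: vec2 1 (-1) = vec2 (s2^-1 +i* 0) (- s2^-1 +i* 0)).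
    rewrite scale_vec2 /isr2 mulr1; congr vec2; simpc; by [].
  move=> w /=; apply: (congr1 (fun t => t / 2)); rewrite expr0n /= sqrrN h2 mulrN. by rewrite ?mulrN ?mulNr ?h2p; field.
- exists (s2^-1), 0, 0, (s2^-1); split.
    change (isr2 R *: vec2 1 'i = vec2 (s2^-1 +i* 0) (0 +i* s2^-1)).
    rewrite scale_vec2 /isr2 mulr1; congr vec2; simpc; by [].
  move=> w /=; apply: (congr1 (fun t => t / 2)); rewrite expr0n /= -expr2 h2. by field.
- exists (s2^-1); exists 0; exists 0; exists (- s2^-1); split.
    change (isr2 R *: vec2 1 (- 'i) = vec2 (s2^-1 +i* 0) (0 +i* (- s2^-1))).
    rewrite scale_vec2 /isr2 mulr1; congr vec2; simpc; by [].
  move=> w /=; apply: (congr1 (fun t => t / 2)); rewrite expr0n /= sqrrN h2 mulrN. by rewrite ?mulrN ?mulNr ?h2p; field.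
- by [].
Qed.

Lemma stab_ov (w : 'cV[C]_2) (k : 'I_6) :
  cabs (braket w (stab R k)) ^+ 2 = (bn w + stab_val w k) / 2.
Proof.
have [a1 [a2 [b1 [b2 [-> <-]]]]] := stab_vec k.
by rewrite overlap; have [-> -> -> ->] := bloch_vec2 a1 a2 b1 b2.
Qed.


Lemma witness_feas (w : 'cV[C]_2) : is_witness w -> forall k : 'I_6, bn w + stab_val w k <= 2.
Proof.
move=> hw k.
have hst : is_stab (stab R k) by exists k, 1; split; [exact: normc1 | by rewrite scale1r].
have h := hw _ hst.
have h0 := cabs_ge0 (braket w (stab R k)).
have : cabs (braket w (stab R k)) ^+ 2 <= 1 by nra.
rewrite stab_ov; lra.
Qed.

Lemma witness6 (w : 'cV[C]_2) : is_witness w ->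
  bn w + bz w <= 2 /\ bn w - bz w <= 2 /\ bn w + bx w <= 2 /\ bn w - bx w <= 2 /\
      bn w + by_ w <= 2 /\ bn w - by_ w <= 2.
Proof.
move=> hw.
have := @witness_feas w hw (Ordinal (isT : (0 < 6)%N)).
have := @witness_feas w hw (Ordinal (isT : (1 < 6)%N)).
have := @witness_feas w hw (Ordinal (isT : (2 < 6)%N)).
have := @witness_feas w hw (Ordinal (isT : (3 < 6)%N)).
have := @witness_feas w hw (Ordinal (isT : (4 < 6)%N)).
have := @witness_feas w hw (Ordinal (isT : (5 < 6)%N)).
rewrite /stab_val /= => h5 h4 h3 h2 h1 h0.
by do ! split.
Qed.

Lemma feas_witness (w : 'cV[C]_2) :
  bn w + bz w <= 2 -> bn w - bz w <= 2 -> bn w + bx w <= 2 -> bn w - bx w <= 2 ->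
  bn w + by_ w <= 2 -> bn w - by_ w <= 2 -> is_witness w.
Proof.
move=> h0 h1 h2 h3 h4 h5 phi [k [u [hu ->]]].
rewrite braketZ cabsM hu mul1r.
have : cabs (braket w (stab R k)) ^+ 2 <= 1.
  rewrite stab_ov; case: k => [[|[|[|[|[|[|k]]]]]] hk] //=; rewrite /stab_val /=; lra.
have h0' := cabs_ge0 (braket w (stab R k)).
nra.
Qed.

Lemma construct (n x y z : R) : 0 <= n -> x^+2 + y^+2 + z^+2 = n^+2 -> 0 < n + z ->
  exists v : 'cV[C]_2, bn v = n /\ bx v = x /\ by_ v = y /\ bz v = z.
Proof.
move=> hn hw hnz.
have two0 : (2:R) != 0 by rewrite pnatr_eq0.
have hnz2 : 0 < (n + z) / 2 by rewrite divr_gt0 // ltr0n.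
set a := Num.sqrt ((n + z) / 2).
have a0 : 0 < a by rewrite /a sqrtr_gt0.
have a2 : a ^+ 2 = (n + z) / 2 by rewrite /a sqr_sqrtr // ltW.
have an : a != 0 by rewrite gt_eqF.
exists (vec2 (a +i* 0) ((x / (2 * a)) +i* (y / (2 * a)))).
have [-> -> -> ->] := bloch_vec2 a 0 (x / (2 * a)) (y / (2 * a)).
have e1 : (x / (2 * a)) ^+ 2 + (y / (2 * a)) ^+ 2 = (x^+2 + y^+2) / (4 * a^+2).
  by field; rewrite ?an ?pnatr_eq0.
have e2 : x^+2 + y^+2 = (n - z) * (n + z) by lra.
have e3 : (x^+2 + y^+2) / (4 * a^+2) = (n - z) / 2.
  rewrite e2 a2; field; lra.
split.
  rewrite expr0n /= addr0 -addrA e1 e3 a2; by field.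
split.
  by field; rewrite ?an ?pnatr_eq0.
split.
  by field; rewrite ?an ?pnatr_eq0.
rewrite expr0n /= addr0 -addrA -opprD e1 e3 a2; by field.
Qed.

Lemma dual_bound (w : 'cV[C]_2) (s : seq (C * 'cV[C]_2)) : is_witness w ->
  (forall p, p \in s -> is_stab p.2) ->
  cabs (braket w (\sum_(p <- s) p.1 *: p.2)) <= \sum_(p <- s) cabs p.1.
Proof.
move=> hw; elim: s => [|p s IH] hs.
  by rewrite !big_nil braket0 /cabs normc0.
rewrite !big_cons braketD braketZ.
apply: le_trans (cabsD _ _) _.
apply: lerD.
  rewrite cabsM.
  have h1 := hw p.2 (hs p (mem_head _ _)).
  have h0 := cabs_ge0 p.1.
  have h2 := cabs_ge0 (braket w p.2).
  nra.
apply: IH => q hq; apply: hs; by rewrite in_cons hq orbT.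
Qed.


Lemma vec2_eta (v : 'cV[C]_2) : v = vec2 (v 0 0) (v 1 0).
Proof. by apply: cV2_eq; rewrite ?vec2_0 ?vec2_1. Qed.

Lemma sq0 (a b : R) : a^+2 + b^+2 = 0 -> a = 0 /\ b = 0.
Proof.
move=> h.
have ha : 0 <= a^+2 := sqr_ge0 a.
have hb : 0 <= b^+2 := sqr_ge0 b.
have ea : a^+2 = 0 by lra.
have eb : b^+2 = 0 by lra.
by move: ea eb => /eqP; rewrite sqrf_eq0 => /eqP -> /eqP; rewrite sqrf_eq0 => /eqP ->.
Qed.

Lemma stab_z (v : 'cV[C]_2) : bn v = 1 -> bz v = 1 -> is_stab v.
Proof.
rewrite (vec2_eta v); move: (v 0 0) (v 1 0) => [a1 a2] [b1 b2].
have [-> _ _ ->] := bloch_vec2 a1 a2 b1 b2 => hn hz.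
have [e1 e2] : b1 = 0 /\ b2 = 0 by apply: sq0; lra.
subst b1 b2.
exists (Ordinal (isT : (0 < 6)%N)), (a1 +i* a2); split.
  by rewrite /cabs /= (_ : a1^+2 + a2^+2 = 1) ?sqrtr1 //; rewrite expr0n /= in hn; lra.
change (vec2 (a1 +i* a2) (0 +i* 0) = (a1 +i* a2) *: vec2 1 0).
by rewrite scale_vec2 mulr1 mulr0.
Qed.

Lemma stab_x (v : 'cV[C]_2) : bn v = 1 -> bx v = 1 -> is_stab v.
Proof.
rewrite (vec2_eta v); move: (v 0 0) (v 1 0) => [a1 a2] [b1 b2].
have [-> -> _ _] := bloch_vec2 a1 a2 b1 b2 => hn hx.
have e : (a1 - b1)^+2 + (a2 - b2)^+2 = 0.
  have -> : (a1 - b1)^+2 + (a2 - b2)^+2 =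
    (a1^+2 + a2^+2 + b1^+2 + b2^+2) - 2 * (a1 * b1 + a2 * b2) by ring.
  by rewrite hn hx subrr.
have [e1 e2] := sq0 (a1 - b1) (a2 - b2) e.
have h1 : b1 = a1 by apply/eqP; rewrite eq_sym -subr_eq0 e1.
have h2 : b2 = a2 by apply/eqP; rewrite eq_sym -subr_eq0 e2.
rewrite h1 h2 in hn *.
have hs := s2_neq0.
have hs2 := s2_sq.
have two0 : (2:R) != 0 by rewrite pnatr_eq0.
have ha : a1^+2 + a2^+2 = 2^-1.
  have h : 2 * (a1^+2 + a2^+2) = 1 by lra.
  by apply: (mulfI two0); rewrite h mulfV.
exists (Ordinal (isT : (2 < 6)%N)), ((a1 * s2) +i* (a2 * s2)); split.
  rewrite /cabs /= (_ : (a1 * s2)^+2 + (a2 * s2)^+2 = 1) ?sqrtr1 //.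
  by rewrite !exprMn hs2 -mulrDl ha; field.
change (vec2 (a1 +i* a2) (a1 +i* a2) = ((a1 * s2) +i* (a2 * s2)) *: (isr2 R *: vec2 1 1)).
rewrite !scale_vec2 /isr2 mulr1; congr vec2; simpc; by rewrite !(mulfK hs).
Qed.

Lemma proj_bloch (v : 'cV[C]_2) : proj v =
  mat2 (((bn v + bz v) / 2) +i* 0) ((bx v / 2) +i* (- (by_ v / 2)))
       ((bx v / 2) +i* (by_ v / 2)) (((bn v - bz v) / 2) +i* 0).
Proof.
have two0 : (2:R) != 0 by rewrite pnatr_eq0.
apply: M2_eq; rewrite !projE /mat2 !mxE /= /bn /bx /by_ /bz;
  move: (v 0 0) (v 1 0) => [a1 a2] [b1 b2]; simpc => /=;
  congr (_ +i* _); by field.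
Qed.


Lemma omega_q_eq (n x y q : R) : 0 < n -> n + x = 2 -> q = s2 * x / n ->
  Num.sqrt (1 - q^+2) = y / n ->
  omega_q q = mat2 (((n + x) / 2) +i* 0) ((x / 2) +i* (- (y / 2)))
       ((x / 2) +i* (y / 2)) (((n - x) / 2) +i* 0).
Proof.
move=> hn hnx hq hsq.
have hx : x = 2 - n by lra.
subst x.
have two0 : (2:R) != 0 by rewrite pnatr_eq0.
have n0 : n != 0 by rewrite gt_eqF.
have hs := s2_neq0.
rewrite /s2 in hs hq.
apply: M2_eq; rewrite /omega_q /PH /PX /PY /PZ /isr2 !mxE /= hsq;
  apply/eqP; rewrite eq_complex /=; apply/andP; split; apply/eqP;
  rewrite hq; field; by rewrite n0 hs hnx two0.
Qed.

Lemma omega_sym_eq (n x : R) : 0 < n -> n + x = 2 -> n = Num.sqrt 3 * x ->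
  omega_sym R = mat2 (((n + x) / 2) +i* 0) ((x / 2) +i* (- (x / 2)))
       ((x / 2) +i* (x / 2)) (((n - x) / 2) +i* 0).
Proof.
move=> hn hnx hs3.
have two0 : (2:R) != 0 by rewrite pnatr_eq0.
have n0 : n != 0 by rewrite gt_eqF.
have s3p : 0 < Num.sqrt (3:R) by rewrite sqrtr_gt0 ltr0n.
have s30 : Num.sqrt (3:R) != 0 by rewrite gt_eqF.
have s31 : Num.sqrt (3:R) + 1 != 0 by rewrite gt_eqF //; lra.
have hx : x = 2 / (Num.sqrt 3 + 1).
  apply: (mulfI s31); by rewrite [RHS]mulrC divfK // mulrDl mul1r -hs3.
rewrite {hs3 hn n0}; have hn' : n = 2 - x by lra.
rewrite hn' hx.
apply: M2_eq; rewrite /omega_sym /PX /PY /PZ !mxE /=;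
  apply/eqP; rewrite eq_complex /=; apply/andP; split; apply/eqP;
  field; by rewrite ?s30 ?s31 ?two0.
Qed.


Lemma dot_le (n x y z dx dy dz : R) : 0 <= n -> x^+2 + y^+2 + z^+2 = n^+2 ->
  dx^+2 + dy^+2 + dz^+2 = 1 -> x*dx + y*dy + z*dz <= n.
Proof.
move=> hn hw hd.
have h : (x*dx + y*dy + z*dz)^+2 <= n^+2.
  have -> : n^+2 = (x^+2 + y^+2 + z^+2) * (dx^+2 + dy^+2 + dz^+2) by rewrite hw hd mulr1.
  have : 0 <= (x*dy - y*dx)^+2 + (x*dz - z*dx)^+2 + (y*dz - z*dy)^+2.
    by rewrite !addr_ge0 // sqr_ge0.
  move=> H; rewrite -subr_ge0; apply: le_trans H _; rewrite le_eqVlt; apply/orP; left; apply/eqP; ring.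
nra.
Qed.

Lemma dot_eq (n x y z dx dy dz : R) : x^+2 + y^+2 + z^+2 = n^+2 ->
  dx^+2 + dy^+2 + dz^+2 = 1 -> x*dx + y*dy + z*dz = n ->
  x = n * dx /\ y = n * dy /\ z = n * dz.
Proof.
move=> hw hd he.
have h0 : (x - n*dx)^+2 + (y - n*dy)^+2 + (z - n*dz)^+2 = 0.
  have -> : (x - n*dx)^+2 + (y - n*dy)^+2 + (z - n*dz)^+2 =
     (x^+2 + y^+2 + z^+2) - 2 * n * (x*dx + y*dy + z*dz) + n^+2 * (dx^+2 + dy^+2 + dz^+2) by ring.
  rewrite hw hd he; ring.
have a0 : 0 <= (x - n*dx)^+2 by exact: sqr_ge0.
have b0 : 0 <= (y - n*dy)^+2 by exact: sqr_ge0.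
have c0 : 0 <= (z - n*dz)^+2 by exact: sqr_ge0.
have ha : (x - n*dx)^+2 = 0 by lra.
have hb : (y - n*dy)^+2 = 0 by lra.
have hc : (z - n*dz)^+2 = 0 by lra.
move: ha hb hc => /eqP; rewrite sqrf_eq0 subr_eq0 => /eqP ->.
move=> /eqP; rewrite sqrf_eq0 subr_eq0 => /eqP ->.
by move=> /eqP; rewrite sqrf_eq0 subr_eq0 => /eqP ->.
Qed.


Lemma value_id (px py pz l mx my mz dx dy dz n x y z : R) :
  mx + my + mz - l = 1 -> mx + l*dx = px -> my + l*dy = py -> mz + l*dz = pz ->
  n + x*px + y*py + z*pz = 2*(mx+my+mz) -
    (mx*(2-n-x) + my*(2-n-y) + mz*(2-n-z) + l*(n - (x*dx + y*dy + z*dz))).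
Proof.
move=> hs <- <- <-.
have -> : 2*(mx+my+mz) = 2*(mx+my+mz) + n * (1 - (mx+my+mz-l)) by rewrite hs subrr mulr0 addr0.
ring.
Qed.

Lemma certificate (px py pz l mx my mz dx dy dz n x y z : R) :
  0 < l -> 0 <= mx -> 0 <= my -> 0 <= mz -> dx^+2 + dy^+2 + dz^+2 = 1 ->
  mx + my + mz - l = 1 -> mx + l*dx = px -> my + l*dy = py -> mz + l*dz = pz ->
  0 <= n -> x^+2 + y^+2 + z^+2 = n^+2 -> n + x <= 2 -> n + y <= 2 -> n + z <= 2 ->
  2*(mx+my+mz) <= n + x*px + y*py + z*pz ->
  x = n * dx /\ y = n * dy /\ z = n * dz /\
      (0 < mx -> n + x = 2) /\ (0 < my -> n + y = 2) /\ (0 < mz -> n + z = 2).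
Proof.
move=> hl hmx hmy hmz hd hs hpx hpy hpz hn hw h1 h2 h3 hL.
rewrite (@value_id px py pz l mx my mz dx dy dz n x y z hs hpx hpy hpz) in hL.
have hdot := @dot_le n x y z dx dy dz hn hw hd.
have t1 : 0 <= mx*(2-n-x) by apply: mulr_ge0 => //; lra.
have t2 : 0 <= my*(2-n-y) by apply: mulr_ge0 => //; lra.
have t3 : 0 <= mz*(2-n-z) by apply: mulr_ge0 => //; lra.
have t4 : 0 <= l*(n - (x*dx + y*dy + z*dz)) by apply: mulr_ge0; lra.
have e1 : mx*(2-n-x) = 0 by lra.
have e2 : my*(2-n-y) = 0 by lra.
have e3 : mz*(2-n-z) = 0 by lra.
have e4 : l*(n - (x*dx + y*dy + z*dz)) = 0 by lra.
move: e4 => /eqP; rewrite mulf_eq0 (gt_eqF hl) /= subr_eq0 => /eqP e4.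
have [ex [ey ez]] := @dot_eq n x y z dx dy dz hw hd (esym e4).
do 3! (split; first done).
split; last split.
- by move=> hp; move: e1 => /eqP; rewrite mulf_eq0 (gt_eqF hp) /= => /eqP; lra.
- by move=> hp; move: e2 => /eqP; rewrite mulf_eq0 (gt_eqF hp) /= => /eqP; lra.
- by move=> hp; move: e3 => /eqP; rewrite mulf_eq0 (gt_eqF hp) /= => /eqP; lra.
Qed.


Lemma two_neq0 : (2:R) != 0. Proof. by rewrite pnatr_eq0. Qed.

Lemma sqrt_facts (a : R) : 0 <= a -> 0 <= Num.sqrt a /\ (Num.sqrt a)^+2 = a.
Proof. by move=> ha; split; [exact: sqrtr_ge0 | exact: sqr_sqrtr]. Qed.

Lemma core (px py pz n x y z : R) :
  px^+2 + py^+2 + pz^+2 = 1 -> 0 <= py -> py <= px -> py <= pz -> 0 < px + pz - 1 ->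
  0 <= n -> x^+2 + y^+2 + z^+2 = n^+2 ->
  n + x <= 2 -> n + y <= 2 -> n + z <= 2 ->
  (forall n' x' y' z', 0 <= n' -> x'^+2 + y'^+2 + z'^+2 = n'^+2 -> 0 < n' + z' ->
      n' + x' <= 2 -> n' - x' <= 2 -> n' + y' <= 2 -> n' - y' <= 2 ->
      n' + z' <= 2 -> n' - z' <= 2 ->
      n' + x'*px + y'*py + z'*pz <= n + x*px + y*py + z*pz) ->
  x = z /\ n + x = 2 /\ 0 <= y /\ y <= x /\ (px = py \/ pz = py -> y = x).
Proof.
move=> hp hpy0 hyx hyz hA hn hw h1 h2 h3 hopt.
set A := px + pz - 1 in hA.
have pz1 : pz <= 1 by nra.
have px1 : px <= 1 by nra.
have [sq0 sq2] := @sqrt_facts (2 * (A^+2 + py^+2)) ltac:(nra).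
set sq := Num.sqrt _ in sq0 sq2.
set l := sq - A.
have hl : 0 < l by rewrite /l; nra.
have l0 : l != 0 by rewrite gt_eqF.
case: (lerP (2*py) (A - l)) => hB.
-
  set dx := (A - l)/(2* l).
  set dy := py / l.
  have ldx : l * dx = (A - l)/2 by rewrite /dx; field; rewrite l0.
  have ldy : l * dy = py by rewrite /dy; field.
  have hdxy : dy <= dx by rewrite -(ler_pM2l hl) ldx ldy; lra.
  have dy0 : 0 <= dy by rewrite /dy divr_ge0 // ltW.
  have dx0 : 0 <= dx by lra.
  have hd : dx^+2 + dy^+2 + dx^+2 = 1.
    have e : (A - l)^+2 + 2*py^+2 - 2* l^+2 = 2*A^+2 + 2*py^+2 - sq^+2 by rewrite /l; ring.
    move: sq2 => sq2'.
    have -> : dx^+2 + dy^+2 + dx^+2 = ((A - l)^+2 + 2*py^+2)/(2* l^+2) by rewrite /dx /dy; field.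
    have -> : (A - l)^+2 + 2*py^+2 = 2* l^+2 by lra.
    rewrite divff //; apply: mulf_neq0; [exact: two_neq0 | exact: expf_neq0].
  set mx := px - (A - l)/2.
  set mz := pz - (A - l)/2.
  have hmx : 0 <= mx by rewrite /mx /A; lra.
  have hmz : 0 <= mz by rewrite /mz /A; lra.
  have hs : mx + 0 + mz - l = 1 by rewrite /mx /mz /A; lra.
  have hpx : mx + l*dx = px by rewrite ldx /mx; lra.
  have hpy : 0 + l*dy = py by rewrite ldy add0r.
  have hpz : mz + l*dx = pz by rewrite ldx /mz; lra.
  have hdx1 : 1 + dx != 0 by rewrite gt_eqF //; lra.
  set nt := 2 / (1 + dx).
  have hnt : nt + nt * dx = 2 by rewrite /nt; field.
  have nt0 : 0 < nt by rewrite /nt divr_gt0 //; lra.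
  have hLt : 2*(mx+0+mz) <= n + x*px + y*py + z*pz.
    have := hopt nt (nt*dx) (nt*dy) (nt*dx).
    rewrite (@value_id px py pz l mx 0 mz dx dy dx nt (nt*dx) (nt*dy) (nt*dx) hs hpx hpy hpz).
    have -> : 2 - nt - nt*dx = 0 by lra.
    have -> : nt - (nt * dx * dx + nt * dy * dy + nt * dx * dx) = nt * (1 - (dx^+2 + dy^+2 + dx^+2)) by ring.
    rewrite hd subrr !mulr0 mul0r !addr0 subr0.
    apply.
    + exact: ltW.
    + have -> : (nt*dx)^+2 + (nt*dy)^+2 + (nt*dx)^+2 = nt^+2 * (dx^+2 + dy^+2 + dx^+2) by ring.
      by rewrite hd mulr1.
    + lra.
    + lra.
    + nra.
    + nra.
    + nra.
    + lra.
    + nra.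
  have [ex [ey [ez [emx [_ emz]]]]] :=
    @certificate px py pz l mx 0 mz dx dy dx n x y z hl hmx (lexx 0) hmz hd hs hpx hpy hpz
      hn hw h1 h2 h3 hLt.
  have hnx : n + x = 2.
    case: (ltrP 0 mx) => hmx'; first exact: emx.
    have hmz' : 0 < mz by lra.
    by rewrite ex -ez; apply: emz.
  split; first by rewrite ex ez.
  split; first done.
  split; first by rewrite ey mulr_ge0.
  split; first by rewrite ey ex ler_wpM2l.
  by case=> e; exfalso; rewrite /A in hB; lra.
-
  have [s30 s32] := @sqrt_facts 3 ltac:(lra).
  set s3 := Num.sqrt 3 in s30 s32.
  have s3p : 0 < s3 by nra.
  have s3n : s3 != 0 by rewrite gt_eqF.
  have s31 : 1 + s3 != 0 by rewrite gt_eqF //; lra.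
  have s33 : s3 + 3 != 0 by rewrite gt_eqF //; lra.
  set t := s3^-1.
  have t0 : 0 < t by rewrite /t invr_gt0.
  have ht3 : 3 * t = s3 by rewrite /t -s32; field.
  have hd : t^+2 + t^+2 + t^+2 = 1.
    have -> : t^+2 + t^+2 + t^+2 = t * (3 * t) by ring.
    by rewrite ht3 /t mulVf.
  have key : A + py <= py * (s3 + 3).
    case: (lerP A (2*py)) => h.
      have : 0 <= s3 * py by rewrite mulr_ge0.
      lra.
    have h4 : (2*A - 2*py)^+2 < sq^+2 by rewrite /l in hB; nra.
    rewrite sq2 in h4.
    have h5 : (A - 2*py)^+2 < (s3 * py)^+2 by rewrite exprMn s32; nra.
    have h6 : A - 2*py < s3 * py.
      have : 0 <= s3 * py by rewrite mulr_ge0.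
      nra.
    lra.
  set l' := (px + py + pz - 1)/(1 + s3).
  have hl' : 0 < l' by rewrite /l' divr_gt0 //; rewrite /A in hA; lra.
  have e13 : (1 + s3) * s3 = s3 + 3 by rewrite mulrDl mul1r -expr2 s32 addrC.
  have lt : l' * t = (A + py)/(s3 + 3) by rewrite /l' /t -e13 /A; field; rewrite s31 s3n.
  have hmy : 0 <= py - l' * t by rewrite lt subr_ge0 ler_pdivrMr //; lra.
  have hmx : 0 <= px - l' * t by lra.
  have hmz : 0 <= pz - l' * t by lra.
  have hl1 : l' * (1 + s3) = px + py + pz - 1 by rewrite /l'; field.
  have hs : (px - l'*t) + (py - l'*t) + (pz - l'*t) - l' = 1.
    have : l' * (3 * t) = l' * s3 by rewrite ht3.
    rewrite mulrDr mulr1 in hl1. move=> h; lra.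
  have hpx : (px - l'*t) + l'*t = px by rewrite subrK.
  have hpy : (py - l'*t) + l'*t = py by rewrite subrK.
  have hpz : (pz - l'*t) + l'*t = pz by rewrite subrK.
  have ht1 : 1 + t != 0 by rewrite gt_eqF //; lra.
  set nt := 2 / (1 + t).
  have hnt : nt + nt * t = 2 by rewrite /nt; field.
  have nt0 : 0 < nt by rewrite /nt divr_gt0 //; lra.
  set mx := px - l'*t in hmx hs hpx. set my := py - l'*t in hmy hs hpy.
  set mz := pz - l'*t in hmz hs hpz.
  have hLt : 2*(mx+my+mz) <= n + x*px + y*py + z*pz.
    have := hopt nt (nt*t) (nt*t) (nt*t).
    rewrite (@value_id px py pz l' mx my mz t t t nt (nt*t) (nt*t) (nt*t) hs hpx hpy hpz).
    have -> : 2 - nt - nt*t = 0 by lra.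
    have -> : nt - (nt * t * t + nt * t * t + nt * t * t) = nt * (1 - (t^+2 + t^+2 + t^+2)) by ring.
    rewrite hd subrr !mulr0 !addr0 subr0.
    apply.
    + exact: ltW.
    + have -> : (nt*t)^+2 + (nt*t)^+2 + (nt*t)^+2 = nt^+2 * (t^+2 + t^+2 + t^+2) by ring.
      by rewrite hd mulr1.
    + nra.
    + lra.
    + nra.
    + lra.
    + nra.
    + lra.
    + nra.
  have [ex [ey [ez [emx [emy emz]]]]] :=
    @certificate px py pz l' mx my mz t t t n x y z hl' hmx hmy hmz hd hs hpx hpy hpz
      hn hw h1 h2 h3 hLt.
  have hnx : n + x = 2.
    case: (ltrP 0 mx) => hmx'; first exact: emx.
    case: (ltrP 0 my) => hmy'; first by rewrite ex -ey; apply: emy.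
    have hmz' : 0 < mz by lra.
    by rewrite ex -ez; apply: emz.
  split; first by rewrite ex ez.
  split; first done.
  split; first by rewrite ey mulr_ge0 // ltW.
  split; first by rewrite ey ex.
  by move=> _; rewrite ey ex.
Qed.


Lemma A_pos (px py pz : R) : px^+2 + py^+2 + pz^+2 = 1 -> 0 <= py -> py <= px -> py <= pz ->
  px + pz - 1 <= 0 -> (px = 0 /\ pz = 1) \/ (px = 1 /\ pz = 0).
Proof.
move=> hp hy hyx hyz hle.
have px0 : 0 <= px by lra.
have pz0 : 0 <= pz by lra.
have hyy : py * py <= px * pz by apply: ler_pM.
have hxz : px * pz <= 0 by nra.
have exz : px * pz = 0 by apply/eqP; rewrite eq_le hxz mulr_ge0.
have ey : py = 0 by nra.
move: exz => /eqP; rewrite mulf_eq0 => /orP[] /eqP e.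
  left; split => //; subst px py; nra.
right; split => //; subst pz py; nra.
Qed.

Lemma bn_ge0 (v : 'cV[C]_2) : 0 <= bn v.
Proof. by rewrite /bn !addr_ge0 // sqr_ge0. Qed.

Lemma main_sec (psi omega : 'cV[R[i]]_2) :
  braket psi psi = 1 ->
  ~ is_stab psi ->
  inPY (proj psi) ->
  is_witness omega ->
  xi_is psi (cabs (braket psi omega) ^+ 2) ->
  (exists q : R, Num.sqrt (2 / 3) <= q <= 1 /\ proj omega = omega_q q) /\
  (inPX (proj psi) \/ inPZ (proj psi) -> proj omega = omega_sym R).
Proof.
move=> hpsi hns hPY hw [[s [[hs1 hs2] hcost]] _].
have hn1 : bn psi = 1.
  by move: hpsi; rewrite braket_self => /(congr1 (@complex.Re R)).
have hp : bx psi ^+ 2 + by_ psi ^+ 2 + bz psi ^+ 2 = 1 by rewrite pure hn1 expr1n.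
move: hPY; rewrite /inPY /inP evX evY evZ => [[[hx0 [hy0 hz0]] [hyx hyz]]].
have hA : 0 < bx psi + bz psi - 1.
  rewrite ltNge; apply/negP => hle.
  case: (@A_pos _ _ _ hp hy0 hyx hyz hle) => [[_ e]|[e _]]; apply: hns.
    exact: stab_z.
  exact: stab_x.
have [w1 [w2 [w3 [w4 [w5 w6]]]]] := @witness6 omega hw.
have hopt : forall n' x' y' z', 0 <= n' -> x'^+2 + y'^+2 + z'^+2 = n'^+2 -> 0 < n' + z' ->
      n' + x' <= 2 -> n' - x' <= 2 -> n' + y' <= 2 -> n' - y' <= 2 ->
      n' + z' <= 2 -> n' - z' <= 2 ->
      n' + x' * bx psi + y' * by_ psi + z' * bz psi <=
      bn omega + bx omega * bx psi + by_ omega * by_ psi + bz omega * bz psi.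
  move=> n' x' y' z' hn' hw' hnz h1 h2 h3 h4 h5 h6.
  have [v [ev1 [ev2 [ev3 ev4]]]] := @construct _ _ _ _ hn' hw' hnz.
  have hwv : is_witness v by apply: feas_witness; rewrite ?ev1 ?ev2 ?ev3 ?ev4.
  have hb := @dual_bound _ _ hwv hs1.
  rewrite -hs2 in hb.
  have h0 := cabs_ge0 (braket v psi).
  have hsq : cabs (braket v psi) ^+ 2 <= cabs (braket psi omega) ^+ 2.
    rewrite -hcost /cost; nra.
  rewrite !overlap ev1 ev2 ev3 ev4 hn1 in hsq.
  nra.
have [hxz [hnx [hy0' [hyx' hpart]]]] :=
  @core _ _ _ _ _ _ _ hp hy0 hyx hyz hA (bn_ge0 omega) (pure omega) w3 w5 w1 hopt.
have hpo := pure omega.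
have hn0 : 0 < bn omega by nra.
have n0 : bn omega != 0 by rewrite gt_eqF.
split.
  set q := s2 * bx omega / bn omega.
  have hss := s2_sq.
  have hq0 : 0 <= q.
    rewrite /q; apply: divr_ge0; last exact: ltW.
    apply: mulr_ge0; [exact: ltW s2_gt0 | lra].
  have hq2 : q ^+ 2 = 2 * bx omega ^+ 2 / bn omega ^+ 2.
    by rewrite /q !exprMn hss exprVn.
  have hn2 : 0 < bn omega ^+ 2 by rewrite exprn_gt0.
  have hsq : Num.sqrt (1 - q ^+ 2) = by_ omega / bn omega.
    have -> : 1 - q ^+ 2 = (by_ omega / bn omega) ^+ 2.
      rewrite hq2 expr_div_n; apply/eqP; rewrite subr_eq -mulrDl.
      rewrite -hxz in hpo.
      have -> : by_ omega ^+ 2 + 2 * bx omega ^+ 2 = bn omega ^+ 2 by lra.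
      by rewrite divff // gt_eqF.
    by rewrite sqrtr_sqr ger0_norm // divr_ge0 // ltW.
  exists q; split.
    apply/andP; split.
      rewrite -(ger0_norm hq0) -sqrtr_sqr ler_sqrt ?sqr_ge0 //.
      rewrite hq2 ler_pdivlMr //.
      rewrite -hxz in hpo.
      have : by_ omega ^+ 2 <= bx omega ^+ 2 by rewrite ler_sqr // ?nnegrE //; lra.
      lra.
    have : q ^+ 2 <= 1.
      rewrite hq2 ler_pdivrMr // mul1r.
      rewrite -hxz in hpo.
      have := sqr_ge0 (by_ omega); lra.
    nra.
  rewrite proj_bloch (@omega_q_eq _ _ _ _ hn0 hnx erefl hsq) -hxz.
  by [].
have hx0' : 0 <= bx omega by lra.
move=> hor.
have hy : by_ omega = bx omega.
  case: hor => [[_ [hX _]] | [_ [_ hZ]]].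
    rewrite evX evY in hX.
    have e : bx psi = by_ psi by apply/eqP; rewrite eq_le hX hyx.
    exact: hpart (or_introl e).
  rewrite evZ evY in hZ.
  have e : bz psi = by_ psi by apply/eqP; rewrite eq_le hZ hyz.
  exact: hpart (or_intror e).
have hs3 : bn omega = Num.sqrt 3 * bx omega.
  have e3 : bn omega ^+ 2 = (Num.sqrt 3 * bx omega) ^+ 2.
    by rewrite exprMn sqr_sqrtr ?ler0n // -hpo -hxz hy; ring.
  rewrite -[bn omega]ger0_norm ?ltW // -sqrtr_sqr e3 sqrtr_sqr ger0_norm //.
  by rewrite mulr_ge0 // sqrtr_ge0.
by rewrite proj_bloch (@omega_sym_eq _ _ hn0 hnx hs3) -hxz hy.
Qed.

End S.

Theorem lemma3 (R : rcfType) (psi omega : 'cV[R[i]]_2) :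
  braket psi psi = 1 ->
  ~ is_stab psi ->
  inPY (proj psi) ->
  is_witness omega ->
  xi_is psi (cabs (braket psi omega) ^+ 2) ->
  (exists q : R, Num.sqrt (2 / 3) <= q <= 1 /\ proj omega = omega_q q) /\
  (inPX (proj psi) \/ inPZ (proj psi) -> proj omega = omega_sym R).
Proof. exact: main_sec. Qed.
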